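(* Let $N\ge1$, $K\ge2$ be integers and let $\alpha\ge\frac{2(K-1)}{K}$. Then for every pure strategy $s\in S$, the profile $(s,s)$ is a Nash equilibrium of $\mathcal{B}_\alpha(N,K)$.
   Context: Fix integers $N\ge1$, $K\ge2$ and a real number $\alpha$. The Colonel Blotto game $\mathcal{B}_\alpha(N,K)$ is the two-player simultaneous-move game with players $A,B$, each with pure strategy set $S=\{s\in\{0,1,\ldots,N\}^K:\sum_{k=1}^K s_k=N\}$, in which the payoff of player $i$ at the pure profile $(s^i,s^{-i})$ is $\pi^i(s^i,s^{-i})=\sum_{k=1}^K\big(\mathbf 1[s^i_k>s^{-i}_k]+\tfrac{\alpha}{2}\mathbf 1[s^i_k=s^{-i}_k]\big)$. Mixed strategies are probability distributions on $S$, with expected payoffs under independent randomization; a Nash equilibrium is a mixed profile from which no unilateral deviation raises a player's expected payoff. *)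

(* Defs.v *)
From mathcomp Require Import all_boot all_order all_algebra.
Set Implicit Arguments. Unset Strict Implicit. Unset Printing Implicit Defensive.
Import Order.TTheory GRing.Theory Num.Theory.
Local Open Scope ring_scope.

(* Colonel Blotto game B_alpha(N,K). A pure strategy is an allocation
   s : 'I_K -> {0..N} of N soldiers to K battlefields (sum = N). *)
Definition alloc (N K : nat) := {ffun 'I_K -> 'I_N.+1}.

Definition is_strategy (N K : nat) (s : alloc N K) : bool :=
  (\sum_(k < K) (s k : nat) == N)%N.

Definition payoff (R : numDomainType) (N K : nat) (alpha : R)
  (s t : alloc N K) : R :=
  \sum_(k < K) ((((t k : nat) < s k)%N)%:R
                 + alpha / 2%:R * (((s k : nat) == t k))%:R).

Definition is_mixed (R : numDomainType) (N K : nat) (p : {ffun alloc N K -> R}) : Prop :=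
  (forall s, 0 <= p s) /\ (forall s, ~~ is_strategy s -> p s = 0) /\
  \sum_s p s = 1.

Definition exp_payoff (R : numDomainType) (N K : nat) (alpha : R)
  (p q : {ffun alloc N K -> R}) : R :=
  \sum_s \sum_t p s * q t * payoff alpha s t.

(* (pA, pB) is a Nash equilibrium: no unilateral (mixed) deviation raises
   the deviator's expected payoff. The game is symmetric, so player B's
   payoff at (pA,pB) is exp_payoff alpha pB pA. *)
Definition nash_eq (R : numDomainType) (N K : nat) (alpha : R)
  (pA pB : {ffun alloc N K -> R}) : Prop :=
  is_mixed pA /\ is_mixed pB /\
  (forall p, is_mixed p -> exp_payoff alpha p pB <= exp_payoff alpha pA pB) /\
  (forall p, is_mixed p -> exp_payoff alpha p pA <= exp_payoff alpha pB pA).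

Definition pure (R : numDomainType) (N K : nat) (s : alloc N K) : {ffun alloc N K -> R} :=
  [ffun t => ((t == s))%:R].

(* Main.v *)
Require Import Defs.
From mathcomp Require Import all_boot all_order all_algebra.
From mathcomp Require Import zify ring lra.
Import Order.TTheory GRing.Theory Num.Theory.
Local Open Scope ring_scope.

Lemma count3 (N K : nat) (s t : alloc N K) :
  (\sum_(k < K) ((s k : nat) < t k) + \sum_(k < K) ((t k : nat) < s k)
   + \sum_(k < K) ((t k : nat) == s k))%N = K.
Proof.
rewrite -!big_split /= -[X in _ = X]card_ord -sum1_card.
apply: eq_bigr => k _; case: (ltngtP (s k) (t k)) => //= H.
Qed.

Lemma wl (N K : nat) (s t : alloc N K) :
  is_strategy s -> is_strategy t ->
  (0 < \sum_(k < K) ((s k : nat) < t k))%N ->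
  (0 < \sum_(k < K) ((t k : nat) < s k))%N.
Proof.
move=> /eqP Hs /eqP Ht HW; rewrite lt0n; apply/negP => /eqP HL.
have Hle : forall k, (s k <= t k)%N.
  move=> k; rewrite leqNgt; apply/negP => Hk.
  move: HL; rewrite (bigD1 k) //= Hk /=. by [].
have Hsum : (\sum_(k < K) ((t k : nat) - s k) = 0)%N.
  by rewrite sumnB // Hs Ht subnn.
move/eqP: Hsum; rewrite sum_nat_eq0 => /forallP Hall.
move: HW; rewrite lt0n => /negP; apply; rewrite sum_nat_eq0; apply/forallP => k.
have := Hall k; rewrite /= subn_eq0 => Hk.
by rewrite ltnNge Hk.
Qed.

Lemma payoffE (R : numDomainType) (N K : nat) (alpha : R) (s t : alloc N K) :
  payoff alpha t s = (\sum_(k < K) ((s k : nat) < t k))%N%:R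
     + alpha / 2%:R * (\sum_(k < K) ((t k : nat) == s k))%N%:R.
Proof.
by rewrite /payoff big_split /= !natr_sum mulr_sumr.
Qed.

Lemma key (R : realFieldType) (N K : nat) (alpha : R) (s t : alloc N K) :
  (2 <= K)%N -> 2%:R * (K%:R - 1) / K%:R <= alpha ->
  is_strategy s -> is_strategy t ->
  payoff alpha t s <= payoff alpha s s.
Proof.
move=> HK Ha Hs Ht.
have Hss : payoff alpha s s = alpha / 2%:R * K%:R.
  rewrite payoffE.
  have -> : (\sum_(k < K) ((s k : nat) < s k))%N = 0%N.
    by apply: big1 => k _; rewrite ltnn.
  have -> : (\sum_(k < K) ((s k : nat) == s k))%N = K.
    by rewrite -[X in _ = X]card_ord -sum1_card; apply: eq_bigr => k _; rewrite eqxx.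
  by rewrite add0r.
rewrite Hss payoffE.
have C := @count3 N K s t.
set W := (\sum_(k < K) ((s k : nat) < t k))%N in C *.
set L := (\sum_(k < K) ((t k : nat) < s k))%N in C *.
set E := (\sum_(k < K) ((t k : nat) == s k))%N in C *.
have HWL := @wl N K s t Hs Ht; rewrite -/W -/L in HWL.
have Kpos : (0 : R) < K%:R by rewrite ltr0n; move: HK; case: (K).
have Ha2 : 2%:R * (K%:R - 1) <= alpha * K%:R.
  by rewrite -ler_pdivrMr.
rewrite -C !natrD.
have Ha2' : K%:R - 1 <= alpha / 2%:R * K%:R.
  by rewrite mulrAC ler_pdivlMr ?ltr0n // mulrC.
suff Hm : (W%:R : R) <= alpha / 2%:R * (W%:R + L%:R).
  by rewrite [alpha / 2%:R * (_ + E%:R)]mulrDr lerD2r.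
have Hk1 : (1 : R) <= K%:R by rewrite ler1n; case: (K) HK.
have Hag : 0 <= alpha / 2%:R.
  have h : 0 <= alpha / 2%:R * K%:R by apply: le_trans Ha2'; rewrite subr_ge0.
  by rewrite pmulr_lge0 in h.
case: (posnP W) => [W0 | Wpos].
  by rewrite W0 add0r; apply: mulr_ge0.
have Lpos := HWL Wpos.
have HWK : (W <= (K - 1) * L)%N.
  have h : (W + L <= K)%N by rewrite -C leq_addr.
  apply: (@leq_trans (K - 1)).
    by lia.
  by rewrite leq_pmulr.
have HWKR : (W%:R : R) <= (K%:R - 1) * L%:R.
  by move: HWK; rewrite -(ler_nat R) natrM natrB //; case: (K) HK.
have HL1 : (1 : R) <= L%:R by rewrite ler1n.
set a := alpha / 2%:R in Ha2 Hag *.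
set w := (W%:R : R) in HWKR *.
set l := (L%:R : R) in HWKR HL1 *.
set k := (K%:R : R) in Ha2 Hk1 HWKR Kpos *.
rewrite -(ler_pM2r Kpos).
have Hw0 : 0 <= w by rewrite /w.
have Hp : 0 <= (a * k - (k - 1)) * (w + l).
  by apply: mulr_ge0; [rewrite subr_ge0 | apply: addr_ge0 => //; apply: le_trans HL1].
nra.
Qed.

Lemma pure_mixed (R : realFieldType) (N K : nat) (s : alloc N K) :
  is_strategy s -> is_mixed (pure R s).
Proof.
move=> Hs; split; [|split].
- by move=> t; rewrite /pure ffunE ler0n.
- move=> t Ht; rewrite /pure ffunE; case: eqP => // E; by rewrite E Hs in Ht.
- rewrite (bigD1 s) //= big1 ?addr0 => [|t Ht]; rewrite /pure ffunE ?eqxx //.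
  by rewrite (negbTE Ht).
Qed.

Lemma exp_pure (R : realFieldType) (N K : nat) (alpha : R) (p : {ffun alloc N K -> R}) (s : alloc N K) :
  exp_payoff alpha p (pure R s) = \sum_t p t * payoff alpha t s.
Proof.
apply: eq_bigr => t _.
rewrite (bigD1 s) //= big1 ?addr0 => [|u Hu]; rewrite /pure ffunE ?eqxx ?mulr1 //.
by rewrite (negbTE Hu) mulr0 mul0r.
Qed.

Theorem proposition6 (R : realFieldType) (N K : nat) (alpha : R) :
  (1 <= N)%N -> (2 <= K)%N ->
  2%:R * (K%:R - 1) / K%:R <= alpha ->
  forall s : alloc N K, is_strategy s ->
  nash_eq alpha (pure R s) (pure R s).
Proof.
move=> HN HK Ha s Hs.
have Hdev : forall p, is_mixed p ->
    exp_payoff alpha p (pure R s) <= exp_payoff alpha (pure R s) (pure R s).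
  move=> p [Hp0 [Hpz Hp1]].
  have -> : exp_payoff alpha (pure R s) (pure R s) = \sum_t p t * payoff alpha s s.
    rewrite -mulr_suml Hp1 mul1r exp_pure (bigD1 s) //= big1 ?addr0 => [|u Hu].
      by rewrite /pure ffunE eqxx mul1r.
    by rewrite /pure ffunE (negbTE Hu) mul0r.
  rewrite exp_pure; apply: ler_sum => t _.
  case Ht: (is_strategy t).
    by apply: ler_wpM2l => //; apply: key.
  by rewrite Hpz ?Ht // !mul0r.
by split; [apply: pure_mixed | split; [apply: pure_mixed | split]].
Qed.
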